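(* Let $m,d,d_{\mathrm{head}}$ be positive integers with $d_{\mathrm{head}}\mid d$, $h=d/d_{\mathrm{head}}$, and let $X\in\mathbb{R}^{m\times d}$, $W_{Q,r},W_{K,r},W_{V,r}\in\mathbb{R}^{d\times d_{\mathrm{head}}}$ for $r=1,\dots,h$, and $W_O\in\mathbb{R}^{d\times d}$. Define $Q_r=XW_{Q,r}$, $K_r=XW_{K,r}$, $V_r=XW_{V,r}$, $E_r=Q_rK_r^\top/\sqrt{d_{\mathrm{head}}}\in\mathbb{R}^{m\times m}$, $A_r=\mathrm{softmax}(E_r)$ (row-wise), $O_r=A_rV_r$, $O=\mathrm{Concat}(O_1,\dots,O_h)\in\mathbb{R}^{m\times d}$ (column-wise), and $f=OW_O$. Assume all entries of $f,O,E_r,Q_r,K_r,V_r$ are nonzero, and let $R(f)\in\mathbb{R}^{m\times d}$ be arbitrary. Set $\Lambda_f=R(f)/f$, $R(O_r)=\big[\tfrac12 O\odot(\Lambda_fW_O^\top)\big]_r$, $\Lambda_{O,r}=R(O_r)/O_r$, $\Phi_r=\big(A_r\odot[\Lambda_{O,r}V_r^\top]\big)/E_r$, $\Theta_{Q,r}=\Phi_rK_r$, $\Theta_{K,r}=\Phi_r^\top Q_r$, $\Theta_{V,r}=A_r^\top\Lambda_{O,r}$, and $\alpha=\frac{1}{8\sqrt{d_{\mathrm{head}}}}$. Then the relevances obtained by applying the bilinear LRP rule to $f=OW_O$, to each $O_r=A_rV_r$, treating softmax as identity relevance propagation ($R(E_r)=R(A_r)$), applying the bilinear rule to $E_r=Q_rK_r^\top/\sqrt{d_{\mathrm{head}}}$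 and to $Q_r=XW_{Q,r}$, $K_r=XW_{K,r}$, $V_r=XW_{V,r}$ (summing the relevance of $X$ over all heads and all three projections) are $$R(W_O)=\tfrac12 W_O\odot[O^\top\Lambda_f],\quad R(W_{Q,r})=\alpha\,W_{Q,r}\odot[X^\top\Theta_{Q,r}],\quad R(W_{K,r})=\alpha\,W_{K,r}\odot[X^\top\Theta_{K,r}],\quad R(W_{V,r})=\tfrac14 W_{V,r}\odot[X^\top\Theta_{V,r}],$$ $$R(X)=X\odot\sum_{r=1}^{h}\Big[\alpha\,\Theta_{Q,r}W_{Q,r}^\top+\alpha\,\Theta_{K,r}W_{K,r}^\top+\tfrac14\Theta_{V,r}W_{V,r}^\top\Big],$$ and they satisfy $$\sum R(X)+\sum R(W_O)+\sum_{r=1}^{h}\Big[\sum R(W_{Q,r})+\sum R(W_{K,r})+\sum R(W_{V,r})\Big]=\sum R(f),$$ where $\sum$ denotes the sum of all entries.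
   Context: $\odot$ is element-wise product; all matrix divisions are element-wise; $[M]_r$ denotes the $r$-th column block (columns $(r-1)d_{\mathrm{head}}+1,\dots,rd_{\mathrm{head}}$) of a matrix $M$ with $d$ columns. Bilinear LRP rule for a bilinear expression $C_{ij}=\sum_a c\,P_{ia}W_{aj}$ (with constant $c$, plus possibly a bias) and output relevance $R(C)$: each product term receives $\frac{c\,P_{ia}W_{aj}}{C_{ij}}R(C)_{ij}$, split equally between its two factors; relevances of an entry are summed over all terms in which it appears. *)

(* Defs.v *)
From HB Require Import structures.
From mathcomp Require Import all_boot all_order all_algebra.
From mathcomp Require Import reals sequences.
Set Implicit Arguments. Unset Strict Implicit. Unset Printing Implicit Defensive.
Import Order.TTheory GRing.Theory Num.Theory.
Local Open Scope ring_scope.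

Definition hadm {R : realType} {m n : nat} (A B : 'M[R]_(m, n)) : 'M[R]_(m, n) :=
  \matrix_(i, j) (A i j * B i j).
Definition ediv {R : realType} {m n : nat} (A B : 'M[R]_(m, n)) : 'M[R]_(m, n) :=
  \matrix_(i, j) (A i j / B i j).

Definition msum {R : realType} {m n : nat} (A : 'M[R]_(m, n)) : R :=
  \sum_(i < m) \sum_(j < n) A i j.

(* column-block indexing: column j of a matrix with h*dh columns lies in block
   j %/ dh at offset j %% dh (0-based); block r, offset c is column r*dh + c. *)
Lemma blk_lt (h dh : nat) (j : 'I_(h * dh)) : (j %/ dh < h)%N.
Proof.
case: dh j => [|dh] j; first by case: j => j; rewrite muln0.
by rewrite ltn_divLR // ltn_ord.
Qed.

Lemma off_lt (h dh : nat) (j : 'I_(h * dh)) : (j %% dh < dh)%N.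
Proof.
case: dh j => [|dh] j; first by case: j => j; rewrite muln0.
by rewrite ltn_pmod.
Qed.

Lemma bidx_lt (h dh : nat) (r : 'I_h) (c : 'I_dh) : (r * dh + c < h * dh)%N.
Proof.
have Hr := ltn_ord r; have Hc := ltn_ord c.
apply: (@leq_trans (r.+1 * dh)); first by rewrite mulSn [(dh + _)%N]addnC ltn_add2l.
by rewrite leq_mul2r Hr orbT.
Qed.

Definition blk (h dh : nat) (j : 'I_(h * dh)) : 'I_h := Ordinal (blk_lt j).
Definition off (h dh : nat) (j : 'I_(h * dh)) : 'I_dh := Ordinal (off_lt j).
Definition bidx (h dh : nat) (r : 'I_h) (c : 'I_dh) : 'I_(h * dh) :=
  Ordinal (bidx_lt r c).

Definition colblk {R : realType} {m h dh : nat} (M : 'M[R]_(m, h * dh)) (r : 'I_h)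
  : 'M[R]_(m, dh) := \matrix_(i, c) M i (bidx r c).

Definition concat {R : realType} {m h dh : nat} (O : 'I_h -> 'M[R]_(m, dh))
  : 'M[R]_(m, h * dh) := \matrix_(i, j) O (blk j) i (off j).

Definition softmax {R : realType} {m n : nat} (E : 'M[R]_(m, n)) : 'M[R]_(m, n) :=
  \matrix_(i, j) (expR (E i j) / \sum_(k < n) expR (E i k)).

(* Bilinear LRP rule for C_ij = sum_a c P_ia W_aj (C = c *: (P *m W)) with
   output relevance RC: the term (i,a,j) receives c P_ia W_aj / C_ij * RC_ij,
   split equally between its two factors; relevances summed over all terms. *)
Definition lrp_left {R : realType} {m p n : nat} (c : R)
  (P : 'M[R]_(m, p)) (W : 'M[R]_(p, n)) (RC : 'M[R]_(m, n)) : 'M[R]_(m, p) :=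
  \matrix_(i, a) \sum_(j < n)
     ((c * P i a * W a j) / ((c *: (P *m W)) i j) * RC i j / 2).
Definition lrp_right {R : realType} {m p n : nat} (c : R)
  (P : 'M[R]_(m, p)) (W : 'M[R]_(p, n)) (RC : 'M[R]_(m, n)) : 'M[R]_(p, n) :=
  \matrix_(a, j) \sum_(i < m)
     ((c * P i a * W a j) / ((c *: (P *m W)) i j) * RC i j / 2).

(* Main.v *)
Require Import Defs.
From HB Require Import structures.
From mathcomp Require Import all_boot all_order all_algebra.
From mathcomp Require Import reals sequences.
From mathcomp.algebra_tactics Require Import ring lra.
Import Order.TTheory GRing.Theory Num.Theory.
Local Open Scope ring_scope.

Lemma lrp_leftE (R : realType) (c : R) m p n (P : 'M[R]_(m, p)) (W : 'M[R]_(p, n)) RC :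
  c != 0 -> lrp_left c P W RC = 2%:R^-1 *: hadm P (ediv RC (P *m W) *m W^T).
Proof.
move=> c0; apply/matrixP => i a; rewrite /lrp_left.
rewrite !mxE !mulr_sumr; apply: eq_bigr => j _.
rewrite !mxE; move: (\sum_(k < p) P i k * W k j) => s.
case: (eqVneq s 0) => [->|h0].
  by rewrite ?(mulr0, invr0, mul0r).
by field; rewrite h0 c0.
Qed.

Lemma lrp_rightE (R : realType) (c : R) m p n (P : 'M[R]_(m, p)) (W : 'M[R]_(p, n)) RC :
  c != 0 -> lrp_right c P W RC = 2%:R^-1 *: hadm W (P^T *m ediv RC (P *m W)).
Proof.
move=> c0; apply/matrixP => a j; rewrite /lrp_right.
rewrite !mxE !mulr_sumr; apply: eq_bigr => i _.
rewrite !mxE; move: (\sum_(k < p) P i k * W k j) => s.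
case: (eqVneq s 0) => [->|h0].
  by rewrite ?(mulr0, invr0, mul0r).
by field; rewrite h0 c0.
Qed.

Lemma lrp_cons (R : realType) (c : R) m p n (P : 'M[R]_(m, p)) (W : 'M[R]_(p, n)) RC :
  c != 0 -> (forall i j, (P *m W) i j != 0) ->
  msum (lrp_left c P W RC) + msum (lrp_right c P W RC) = msum RC.
Proof.
move=> c0 nz; rewrite /msum /lrp_left /lrp_right.
under eq_bigr do under eq_bigr do rewrite mxE.
under [X in _ + X = _]eq_bigr do under eq_bigr do rewrite mxE.
under eq_bigr do rewrite exchange_big /=.
rewrite [X in _ + X = _]exchange_big /=.
under [X in _ + X = _]eq_bigr do rewrite exchange_big /=.
rewrite [X in _ + X = _]exchange_big /= -big_split /=; apply: eq_bigr => i _.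
rewrite -big_split /=; apply: eq_bigr => j _.
have := nz i j.
rewrite -mulr_suml -mulr_suml -mulr_suml.
rewrite !mxE => h.
under eq_bigr do rewrite -mulrA.
rewrite -mulr_sumr.
by field; rewrite h c0.
Qed.

Section Aux.
Variable R : realType.

Lemma ediv_hadmZ m n (P M : 'M[R]_(m, n)) k :
  (forall i j, P i j != 0) -> ediv (k *: hadm P M) P = k *: M.
Proof. by move=> nz; apply/matrixP => i j; rewrite !mxE; field; rewrite nz. Qed.

Lemma ediv_scale m n (M E : 'M[R]_(m, n)) s :
  s != 0 -> ediv M (s *: E) = s^-1 *: ediv M E.
Proof.
move=> s0; apply/matrixP => i j; rewrite !mxE.
case: (eqVneq (E i j) 0) => [->|e0]; first by rewrite ?(mulr0, invr0, mul0r).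
by field; rewrite e0 s0.
Qed.

Lemma edivZl m n (M N : 'M[R]_(m, n)) k : ediv (k *: M) N = k *: ediv M N.
Proof. by apply/matrixP => i j; rewrite !mxE mulrA. Qed.

Lemma hadmZr m n (A M : 'M[R]_(m, n)) k : hadm A (k *: M) = k *: hadm A M.
Proof. by apply/matrixP => i j; rewrite !mxE mulrCA. Qed.

Lemma hadmDr m n (A M N : 'M[R]_(m, n)) : hadm A (M + N) = hadm A M + hadm A N.
Proof. by apply/matrixP => i j; rewrite !mxE mulrDr. Qed.

Lemma hadm_sumr m n I (r : seq I) (A : 'M[R]_(m, n)) (F : I -> 'M[R]_(m, n)) :
  hadm A (\sum_(k <- r) F k) = \sum_(k <- r) hadm A (F k).
Proof.
apply/matrixP => i j; rewrite !mxE !summxE mulr_sumr.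
by apply: eq_bigr => k _; rewrite mxE.
Qed.

Lemma hadm_tr m n (A B : 'M[R]_(m, n)) : (hadm A B)^T = hadm A^T B^T.
Proof. by apply/matrixP => i j; rewrite !mxE. Qed.

Lemma trmxZ' m n (A : 'M[R]_(m, n)) k : (k *: A)^T = k *: A^T.
Proof. by apply/matrixP => i j; rewrite !mxE. Qed.

Lemma msum_tr m n (A : 'M[R]_(m, n)) : msum A^T = msum A.
Proof. rewrite /msum exchange_big; apply: eq_bigr => i _; apply: eq_bigr => j _; by rewrite mxE. Qed.

Lemma msumD m n (A B : 'M[R]_(m, n)) : msum (A + B) = msum A + msum B.
Proof.
rewrite /msum -big_split; apply: eq_bigr => i _; rewrite -big_split.
by apply: eq_bigr => j _; rewrite mxE.
Qed.

Lemma msum_sum m n I (r : seq I) (F : I -> 'M[R]_(m, n)) :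
  msum (\sum_(k <- r) F k) = \sum_(k <- r) msum (F k).
Proof.
elim: r => [|x r IH]; first by rewrite !big_nil /msum big1 // => i _; rewrite big1 // => j _; rewrite mxE.
by rewrite !big_cons msumD IH.
Qed.
End Aux.

Lemma blk_bidx h dh (r : 'I_h) (c : 'I_dh) : blk (bidx r c) = r.
Proof.
apply: val_inj => /=; have c0 : (0 < dh)%N by case: c => c /= /(leq_ltn_trans (leq0n c)).
by rewrite divnMDl // divn_small ?addn0.
Qed.

Lemma off_bidx h dh (r : 'I_h) (c : 'I_dh) : off (bidx r c) = c.
Proof. by apply: val_inj => /=; rewrite modnMDl modn_small. Qed.

Lemma bidx_blk h dh (j : 'I_(h * dh)) : bidx (blk j) (off j) = j.
Proof. by apply: val_inj => /=; rewrite -divn_eq. Qed.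

Lemma sum_bidx (R : realType) h dh (F : 'I_(h * dh) -> R) :
  \sum_(j < h * dh) F j = \sum_(r < h) \sum_(c < dh) F (bidx r c).
Proof.
rewrite pair_big /= (reindex (fun p : 'I_h * 'I_dh => bidx p.1 p.2)) //=.
exists (fun j => (blk j, off j)) => [[r c] _|j _] /=.
  by rewrite blk_bidx off_bidx.
by rewrite bidx_blk.
Qed.

Lemma msum_colblk (R : realType) m h dh (M : 'M[R]_(m, h * dh)) :
  \sum_(r < h) msum (colblk M r) = msum M.
Proof.
rewrite /msum exchange_big /=; apply: eq_bigr => i _.
rewrite sum_bidx; apply: eq_bigr => r _; apply: eq_bigr => c _; by rewrite mxE.
Qed.

Theorem proposition2 (R : realType) (m h dh : nat)
  (hm : (0 < m)%N) (hh : (0 < h)%N) (hdh : (0 < dh)%N)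
  (X : 'M[R]_(m, h * dh)) (WQ WK WV : 'I_h -> 'M[R]_(h * dh, dh))
  (WO : 'M[R]_(h * dh, h * dh)) (Rf : 'M[R]_(m, h * dh)) :
  (* forward pass *)
  let sq := Num.sqrt (dh%:R : R) in
  let Q := fun r => X *m WQ r in
  let K := fun r => X *m WK r in
  let V := fun r => X *m WV r in
  let E := fun r => sq^-1 *: (Q r *m (K r)^T) in
  let A := fun r => softmax (E r) in
  let Or := fun r => A r *m V r in
  let O := concat Or in
  let f := O *m WO in
  (forall i j, f i j != 0) -> (forall i j, O i j != 0) ->
  (forall r i j, E r i j != 0) -> (forall r i j, Q r i j != 0) ->
  (forall r i j, K r i j != 0) -> (forall r i j, V r i j != 0) ->
  (* relevances produced by the LRP rules *)
  let RO := lrp_left 1 O WO Rf in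
  let RWO := lrp_right 1 O WO Rf in
  let ROr := fun r => colblk RO r in
  let RA := fun r => lrp_left 1 (A r) (V r) (ROr r) in
  let RV := fun r => lrp_right 1 (A r) (V r) (ROr r) in
  let RE := RA in (* softmax: identity relevance propagation *)
  let RQ := fun r => lrp_left sq^-1 (Q r) (K r)^T (RE r) in
  let RK := fun r => (lrp_right sq^-1 (Q r) (K r)^T (RE r))^T in
  let RWQ := fun r => lrp_right 1 X (WQ r) (RQ r) in
  let RWK := fun r => lrp_right 1 X (WK r) (RK r) in
  let RWV := fun r => lrp_right 1 X (WV r) (RV r) in
  let RX := \sum_(r < h) (lrp_left 1 X (WQ r) (RQ r) + lrp_left 1 X (WK r) (RK r)
                          + lrp_left 1 X (WV r) (RV r)) in
  (* closed forms *)
  let Lf := ediv Rf f in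
  let ROc := fun r => colblk ((2%:R)^-1 *: hadm O (Lf *m WO^T)) r in
  let LO := fun r => ediv (ROc r) (Or r) in
  let Phi := fun r => ediv (hadm (A r) (LO r *m (V r)^T)) (E r) in
  let TQ := fun r => Phi r *m K r in
  let TK := fun r => (Phi r)^T *m Q r in
  let TV := fun r => (A r)^T *m LO r in
  let alpha := (8%:R * sq)^-1 in
  ([/\ RWO = (2%:R)^-1 *: hadm WO (O^T *m Lf),
      forall r, RWQ r = alpha *: hadm (WQ r) (X^T *m TQ r),
      forall r, RWK r = alpha *: hadm (WK r) (X^T *m TK r),
      forall r, RWV r = (4%:R)^-1 *: hadm (WV r) (X^T *m TV r)
    & RX = hadm X (\sum_(r < h) (alpha *: (TQ r *m (WQ r)^T)
                                + alpha *: (TK r *m (WK r)^T)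
                                + (4%:R)^-1 *: (TV r *m (WV r)^T)))])
  /\ msum RX + msum RWO
      + \sum_(r < h) (msum (RWQ r) + msum (RWK r) + msum (RWV r)) = msum Rf.
Proof.
move=> sq Q K V E A Or O f hf hO hE hQ hK hV RO RWO ROr RA RV RE RQ RK RWQ RWK RWV RX
  Lf ROc LO Phi TQ TK TV alpha.
have sq0 : sq != 0.
  have : 0 < sq by rewrite sqrtr_gt0 ltr0n.
  by rewrite lt0r => /andP[].
have o0 : (1 : R) != 0 := oner_neq0 _.
have isq0 : sq^-1 != 0 by rewrite invr_eq0.
have ea : alpha = 2%:R^-1 * (2%:R^-1 * (sq^-1 * 2%:R^-1)).
  by rewrite /alpha; field; rewrite sq0.
have eRO : RO = 2%:R^-1 *: hadm O (Lf *m WO^T) by rewrite /RO lrp_leftE.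
have eROr : forall r, ROr r = ROc r by move=> r; rewrite /ROr eRO.
have eRA : forall r, RA r = 2%:R^-1 *: hadm (A r) (LO r *m (V r)^T).
  by move=> r; rewrite /RA lrp_leftE // eROr.
have eRV : forall r, RV r = 2%:R^-1 *: hadm (V r) (TV r).
  by move=> r; rewrite /RV lrp_rightE // eROr.
have eQK : forall r, Q r *m (K r)^T = sq *: E r.
  by move=> r; rewrite /E scalerA mulfV // scale1r.
have eREd : forall r, ediv (RE r) (Q r *m (K r)^T) = (sq^-1 * 2%:R^-1) *: Phi r.
  by move=> r; rewrite eQK ediv_scale // /RE eRA edivZl scalerA.
have eRQ : forall r, RQ r = (2%:R^-1 * (sq^-1 * 2%:R^-1)) *: hadm (Q r) (TQ r).
  by move=> r; rewrite /RQ lrp_leftE // eREd trmxK -scalemxAl hadmZr scalerA.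
have eRK : forall r, RK r = (2%:R^-1 * (sq^-1 * 2%:R^-1)) *: hadm (K r) (TK r).
  move=> r; rewrite /RK lrp_rightE // eREd -scalemxAr hadmZr scalerA trmxZ' hadm_tr.
  by rewrite trmxK; congr (_ *: hadm _ _); rewrite trmx_mul trmxK.
have lQ : forall r, lrp_left 1 X (WQ r) (RQ r) = hadm X (alpha *: (TQ r *m (WQ r)^T)).
  move=> r; rewrite lrp_leftE // eRQ ediv_hadmZ // -scalemxAl hadmZr scalerA.
  by rewrite ea hadmZr.
have lK : forall r, lrp_left 1 X (WK r) (RK r) = hadm X (alpha *: (TK r *m (WK r)^T)).
  move=> r; rewrite lrp_leftE // eRK ediv_hadmZ // -scalemxAl hadmZr scalerA.
  by rewrite ea hadmZr.
have lV : forall r, lrp_left 1 X (WV r) (RV r) = hadm X (4%:R^-1 *: (TV r *m (WV r)^T)).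
  move=> r; rewrite lrp_leftE // eRV ediv_hadmZ // -scalemxAl hadmZr scalerA.
  by rewrite hadmZr; congr (_ *: _); field.
split; first split.
- by rewrite /RWO lrp_rightE.
- move=> r; rewrite /RWQ lrp_rightE // eRQ ediv_hadmZ // -scalemxAr hadmZr scalerA.
  by rewrite ea.
- move=> r; rewrite /RWK lrp_rightE // eRK ediv_hadmZ // -scalemxAr hadmZr scalerA.
  by rewrite ea.
- move=> r; rewrite /RWV lrp_rightE // eRV ediv_hadmZ // -scalemxAr hadmZr scalerA.
  by congr (_ *: _); field.
- rewrite /RX hadm_sumr; apply: eq_bigr => r _.
  by rewrite lQ lK lV !hadmDr.
have eOr : forall r i c, Or r i c = O i (bidx r c).
  by move=> r i c; rewrite /O /concat mxE blk_bidx off_bidx.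
have cO : msum RO + msum RWO = msum Rf by apply: lrp_cons.
have cA : forall r, msum (RA r) + msum (RV r) = msum (ROr r).
  by move=> r; apply: lrp_cons => // i c; rewrite -/(Or r) eOr.
have cE : forall r, msum (RQ r) + msum (RK r) = msum (RE r).
  move=> r; rewrite /RK msum_tr; apply: lrp_cons => // i j.
  by rewrite eQK mxE mulf_neq0.
have cQ : forall r, msum (lrp_left 1 X (WQ r) (RQ r)) + msum (RWQ r) = msum (RQ r).
  by move=> r; apply: lrp_cons => // i j; apply: hQ.
have cK : forall r, msum (lrp_left 1 X (WK r) (RK r)) + msum (RWK r) = msum (RK r).
  by move=> r; apply: lrp_cons => // i j; apply: hK.
have cV : forall r, msum (lrp_left 1 X (WV r) (RV r)) + msum (RWV r) = msum (RV r).
  by move=> r; apply: lrp_cons => // i j; apply: hV.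
have -> : msum RX + msum RWO + \sum_(r < h) (msum (RWQ r) + msum (RWK r) + msum (RWV r))
   = \sum_(r < h) msum (ROr r) + msum RWO.
  rewrite addrAC /RX msum_sum -big_split /=; congr (_ + _); apply: eq_bigr => r _.
  rewrite !msumD -cA -cE -cQ -cK -cV /RE; lra.
by rewrite /ROr msum_colblk.
Qed.
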